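(* Let $\Gamma$ be a Veldkamp $n$-gon ($n\ge2$) and let $(x_0,x_1,\dots,x_n)$ and $(y_0,y_1,\dots,y_n)$ be two roots with $x_0=y_0$ and $x_n=y_n$. Then $x_1$ and $y_1$ are opposite at $x_0$ (i.e. $x_1\equiv_{x_0}y_1$) if and only if $x_{n-1}$ and $y_{n-1}$ are opposite at $x_n$.
   Context: A graph is a pair $(V,E)$ with $E$ a set of $2$-element subsets of $V$; $\Gamma_v$ is the set of neighbors of $v$. An $s$-path is a sequence $(x_0,\dots,x_s)$ of vertices with consecutive vertices adjacent and $x_{i-2}\ne x_i$ for $i\in[2,s]$. A closed $s$-path is an $s$-path with $s\ge 3$ whose first and last vertices coincide; an $s$-circuit is the subgraph determined by a closed $s$-path. An opposition relation on a set $X$ is a symmetric anti-reflexive relation; it is $k$-plump if for every $S\subseteq X$ with $|S|\le k$ some element of $X$ is opposite all elements of $S$. A Veldkamp graph is a graph with a $2$-plump opposition relation $\equiv_v$ on $\Gamma_v$ for each vertex $v$. A path $(v_0,\dots,v_s)$ is straight if $v_{i-1}\equiv_{v_i}v_{i+1}$ for all $i\in[1,s-1]$; a circuit is straight if every path in it is straight. A Veldkamp $n$-gon ($n\ge2$) is a Veldkamp graph satisfying (VP1) connected and bipartite; (VP2) for each $k\in[1,n-1]$ each straight $k$-path is the unique straight path between its endpoints of length at most $k$; (VP3) every straight $(n+1)$-path lies in a straight $2n$-circuit. A root is a straight $n$-path. *)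

(* Defs.v *)
From Stdlib Require Import Arith Lia List Relations.
Import ListNotations.

Definition is_graph {V : Type} (adj : V -> V -> Prop) : Prop :=
  (forall u v, adj u v -> adj v u) /\ (forall u, ~ adj u u).

Definition opposition_rel {V : Type} (X : V -> Prop) (R : V -> V -> Prop) : Prop :=
  (forall a b, R a b -> X a /\ X b) /\
  (forall a b, R a b -> R b a) /\
  (forall a, ~ R a a).

Definition plump {V : Type} (k : nat) (X : V -> Prop) (R : V -> V -> Prop) : Prop :=
  forall S : list V, (forall s, In s S -> X s) -> length S <= k ->
    exists c, X c /\ forall s, In s S -> R c s.

Definition veldkamp_graph {V : Type} (adj : V -> V -> Prop)
    (opp : V -> V -> V -> Prop) : Prop :=
  is_graph adj /\
  forall v, opposition_rel (adj v) (opp v) /\ plump 2 (adj v) (opp v).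

(* An s-path is the sequence (p 0, ..., p s). *)
Definition is_path {V : Type} (adj : V -> V -> Prop) (s : nat) (p : nat -> V) : Prop :=
  (forall i, i < s -> adj (p i) (p (S i))) /\
  (forall i, 2 <= i <= s -> p (i - 2) <> p i).

Definition straight {V : Type} (opp : V -> V -> V -> Prop) (s : nat) (p : nat -> V) : Prop :=
  forall i, 1 <= i <= s - 1 -> opp (p i) (p (i - 1)) (p (S i)).

Definition straight_path {V : Type} adj opp (s : nat) (p : nat -> V) : Prop :=
  is_path adj s p /\ straight opp s p.

Definition closed_path {V : Type} (adj : V -> V -> Prop) (s : nat) (c : nat -> V) : Prop :=
  3 <= s /\ is_path adj s c /\ c 0 = c s.

Definition circ_vertex {V : Type} (s : nat) (c : nat -> V) (v : V) : Prop :=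
  exists i, i <= s /\ c i = v.

Definition circ_edge {V : Type} (s : nat) (c : nat -> V) (u v : V) : Prop :=
  exists i, i < s /\ ((c i = u /\ c (S i) = v) \/ (c i = v /\ c (S i) = u)).

Definition path_in_circuit {V : Type} (s : nat) (c : nat -> V) (m : nat) (p : nat -> V) : Prop :=
  (forall i, i <= m -> circ_vertex s c (p i)) /\
  (forall i, i < m -> circ_edge s c (p i) (p (S i))).

Definition straight_circuit {V : Type} adj opp (s : nat) (c : nat -> V) : Prop :=
  forall m p, is_path adj m p -> path_in_circuit s c m p -> straight opp m p.

Definition connected {V : Type} (adj : V -> V -> Prop) : Prop :=
  forall u v, clos_refl_trans V adj u v.

Definition bipartite {V : Type} (adj : V -> V -> Prop) : Prop :=
  exists col : V -> bool, forall u v, adj u v -> col u <> col v.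

Definition veldkamp_ngon {V : Type} (adj : V -> V -> Prop)
    (opp : V -> V -> V -> Prop) (n : nat) : Prop :=
  2 <= n /\ veldkamp_graph adj opp /\
  (connected adj /\ bipartite adj) /\
  (forall k p, 1 <= k <= n - 1 -> straight_path adj opp k p ->
     forall j q, j <= k -> straight_path adj opp j q ->
       q 0 = p 0 -> q j = p k -> j = k /\ forall i, i <= k -> q i = p i) /\
  (forall p, straight_path adj opp (n + 1) p ->
     exists c, closed_path adj (2 * n) c /\ straight_circuit adj opp (2 * n) c /\
               path_in_circuit (2 * n) c (n + 1) p).

Definition root {V : Type} adj opp (n : nat) (p : nat -> V) : Prop :=
  straight_path adj opp n p.

(* Main.v *)
Require Import Defs.
From Stdlib Require Import Arith.
From Stdlib Require Import Lia ZArith.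

Lemma mk_sp {V : Type} (adj : V -> V -> Prop) (opp : V -> V -> V -> Prop) L (w : nat -> V) :
  (forall v a, ~ opp v a a) ->
  (forall i, i < L -> adj (w i) (w (S i))) ->
  (forall i, 1 <= i <= L - 1 -> opp (w i) (w (i-1)) (w (S i))) ->
  straight_path adj opp L w.
Proof.
  intros Hoa Ha Ho. split; [split|]; auto.
  intros i Hi Heq. specialize (Ho (i-1) ltac:(lia)).
  replace (i-1-1) with (i-2) in Ho by lia. replace (S (i-1)) with i in Ho by lia.
  rewrite Heq in Ho. exact (Hoa _ _ Ho).
Qed.

Lemma c_straight {V : Type} (adj : V -> V -> Prop) (opp : V -> V -> V -> Prop) n c :
  closed_path adj (2*n) c -> straight_circuit adj opp (2*n) c ->
  forall i, 1 <= i <= 2*n-1 -> opp (c i) (c (i-1)) (c (S i)).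
Proof.
  intros [_ [Hp _]] Hsc. apply (Hsc (2*n) c Hp). split.
  - intros i Hi. exists i; auto.
  - intros i Hi. exists i. split; auto.
Qed.

Definition dd {V : Type} (c : nat -> V) (n : nat) (z : Z) : V :=
  c (Z.to_nat (z mod Z.of_nat (2*n))).

Lemma dd_per {V : Type} (c : nat -> V) n z t : 1 <= n ->
  dd c n (z + Z.of_nat (2*n) * t) = dd c n z.
Proof.
  intros Hn. unfold dd. rewrite (Z.mul_comm _ t), Z.mod_add; auto. lia.
Qed.

Lemma dd_nat {V : Type} (c : nat -> V) n i : 1 <= n -> c 0 = c (2*n) -> i <= 2*n ->
  dd c n (Z.of_nat i) = c i.
Proof.
  intros Hn H0 Hi. unfold dd. destruct (Nat.eq_dec i (2*n)).
  - subst. rewrite Z.mod_same by lia. simpl. auto.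
  - rewrite Z.mod_small by lia. rewrite Nat2Z.id; auto.
Qed.

Lemma dd_cases n z : 1 <= n -> exists i t, i < 2*n /\ z = (Z.of_nat i + Z.of_nat (2*n) * t)%Z.
Proof.
  intros Hn. exists (Z.to_nat (z mod Z.of_nat (2*n))), (z / Z.of_nat (2*n))%Z.
  pose proof (Z.mod_pos_bound z (Z.of_nat (2*n)) ltac:(lia)).
  pose proof (Z.div_mod z (Z.of_nat (2*n)) ltac:(lia)).
  split; lia.
Qed.

Lemma fwd (V : Type) (adj : V -> V -> Prop)
    (opp : V -> V -> V -> Prop) (n : nat) :
  2 <= n -> veldkamp_ngon adj opp n ->
  forall x y : nat -> V, root adj opp n x -> root adj opp n y ->
    x 0 = y 0 -> x n = y n ->
    opp (x 0) (x 1) (y 1) -> opp (x n) (x (n - 1)) (y (n - 1)).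
Proof.
  intros Hn Hv x y Hx Hy H0 Hnn Hop.
  destruct Hv as [_ [[[Hsym Hirr] Hopp] [_ [HVP2 HVP3]]]].
  assert (Hos: forall v a b, opp v a b -> opp v b a)
    by (intros v a b; apply (proj1 (proj2 (proj1 (Hopp v))))).
  assert (Hoa: forall v a, ~ opp v a a)
    by (intros v a; apply (proj2 (proj2 (proj1 (Hopp v))))).
  destruct Hx as [[Hxa _] Hxs]. destruct Hy as [[Hya _] Hys].
  set (P := fun t => if t <=? n then y (n - t) else x 1).
  assert (SP: straight_path adj opp (n+1) P).
  { apply mk_sp; auto.
    - intros i Hi. unfold P. destruct (Nat.leb_spec i n); destruct (Nat.leb_spec (S i) n); try lia.
      + apply Hsym. replace (n-i) with (S (n - S i)) by lia. apply Hya; lia.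
      + replace (n-i) with 0 by lia. rewrite <- H0. apply Hxa; lia.
    - intros i Hi. unfold P. destruct (Nat.leb_spec i n); destruct (Nat.leb_spec (i-1) n);
        destruct (Nat.leb_spec (S i) n); try lia.
      + apply Hos. replace (n-(i-1)) with (S (n-i)) by lia.
        replace (n - S i) with (n - i - 1) by lia. apply Hys; lia.
      + replace (n-i) with 0 by lia. replace (n-(i-1)) with 1 by lia.
        rewrite <- H0. apply Hos. exact Hop. }
  destruct (HVP3 P SP) as [c [Hcp [Hsc Hpc]]].
  pose proof Hcp as [_ [[Hca Hcnb] Hc0]].
  pose proof (c_straight adj opp n c Hcp Hsc) as Hcs.
  assert (Hwrap : c (2*n-1) <> c 1).
  { intro E.
    set (p := fun i => c (1+i)). set (q := fun i => c (n + (n-1-i))).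
    assert (Sp: straight_path adj opp (n-1) p).
    { apply mk_sp; auto; intros i Hi; unfold p.
      - apply Hca; lia.
      - replace (1 + (i-1)) with (1+i-1) by lia. apply Hcs; lia. }
    assert (Sq: straight_path adj opp (n-1) q).
    { apply mk_sp; auto; intros i Hi; unfold q.
      - apply Hsym. replace (n + (n-1-i)) with (S (n + (n - 1 - S i))) by lia. apply Hca; lia.
      - apply Hos. replace (n + (n-1-(i-1))) with (S (n + (n-1-i))) by lia.
        replace (n + (n-1-S i)) with (n + (n-1-i) - 1) by lia. apply Hcs; lia. }
    destruct (HVP2 (n-1) p ltac:(lia) Sp (n-1) q (Nat.le_refl _) Sq) as [_ Heq].
    - unfold p, q. replace (n + (n-1-0)) with (2*n-1) by lia. rewrite E. f_equal.
    - unfold p, q. f_equal. lia.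
    - specialize (Heq (n-2) ltac:(lia)). unfold p, q in Heq.
      replace (n + (n-1-(n-2))) with (n+1) in Heq by lia.
      replace (1 + (n-2)) with (n+1-2) in Heq by lia.
      apply (Hcnb (n+1) ltac:(lia)). auto. }
  set (T := Z.of_nat (2*n)).
  set (d := dd c n).
  assert (Dper: forall z t, d (z + T * t)%Z = d z) by (intros; apply dd_per; lia).
  assert (Dnat: forall i, i <= 2*n -> d (Z.of_nat i) = c i) by (intros; apply dd_nat; auto; lia).
  assert (F1: forall z, adj (d z) (d (z+1)%Z)).
  { intros z. destruct (dd_cases n z) as [i [t [Hi ->]]]; [lia|].
    fold T. replace (Z.of_nat i + T*t + 1)%Z with (Z.of_nat (S i) + T*t)%Z by lia.
    rewrite !Dper, !Dnat by lia. apply Hca; lia. }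
  assert (F2: forall z, opp (d z) (d (z-1)%Z) (d (z+1)%Z)).
  { intros z. destruct (dd_cases n z) as [i [t [Hi ->]]]; [lia|]. fold T.
    destruct i as [|i].
    - replace (Z.of_nat 0 + T*t)%Z with (Z.of_nat (2*n) + T*(t-1))%Z by lia.
      replace (Z.of_nat (2*n) + T*(t-1) - 1)%Z with (Z.of_nat (2*n-1) + T*(t-1))%Z by lia.
      replace (Z.of_nat (2*n) + T*(t-1) + 1)%Z with (Z.of_nat 1 + T*t)%Z by lia.
      rewrite !Dper, !Dnat by lia. rewrite <- Hc0.
      set (w := fun j => match j with 0 => c (2*n-1) | 1 => c 0 | _ => c 1 end).
      assert (Hw: is_path adj 2 w).
      { split.
        - intros j Hj. destruct j as [|[|j]]; try lia.
          + change (adj (c (2*n-1)) (c 0)).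
            pose proof (Hca (2*n-1) ltac:(lia)) as K.
            replace (S (2*n-1)) with (2*n) in K by lia. rewrite <- Hc0 in K. exact K.
          + apply Hca; lia.
        - intros j Hj. destruct j as [|[|[|j]]]; try lia. simpl. exact Hwrap. }
      apply (Hsc 2 w Hw) with (i := 1); [|lia].
      split.
      + intros j Hj. destruct j as [|[|[|j]]]; try lia; simpl.
        * exists (2*n-1). split; auto; lia.
        * exists 0. split; auto; lia.
        * exists 1. split; auto; lia.
      + intros j Hj. destruct j as [|[|j]]; try lia; simpl.
        * exists (2*n-1). split; [lia|]. left. split; auto.
          replace (S (2*n-1)) with (2*n) by lia. auto.
        * exists 0. split; [lia|]. left. auto.
    - replace (Z.of_nat (S i) + T*t - 1)%Z with (Z.of_nat i + T*t)%Z by lia.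
      replace (Z.of_nat (S i) + T*t + 1)%Z with (Z.of_nat (S (S i)) + T*t)%Z by lia.
      rewrite !Dper, !Dnat by lia.
      pose proof (Hcs (S i) ltac:(lia)) as K. simpl in K. rewrite Nat.sub_0_r in K. exact K. }
  assert (Seg: forall a s L, (s = 1 \/ s = -1)%Z ->
            straight_path adj opp L (fun i => d (a + s * Z.of_nat i)%Z)).
  { intros a s L Hs. apply mk_sp; auto; intros i Hi; destruct Hs; subst.
    - replace (a + 1 * Z.of_nat (S i))%Z with (a + 1 * Z.of_nat i + 1)%Z by lia. apply F1.
    - apply Hsym. replace (a + -1 * Z.of_nat i)%Z with (a + -1 * Z.of_nat (S i) + 1)%Z by lia.
      apply F1.
    - replace (a + 1 * Z.of_nat (i-1))%Z with (a + 1 * Z.of_nat i - 1)%Z by lia.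
      replace (a + 1 * Z.of_nat (S i))%Z with (a + 1 * Z.of_nat i + 1)%Z by lia. apply F2.
    - apply Hos.
      replace (a + -1 * Z.of_nat (i-1))%Z with (a + -1 * Z.of_nat i + 1)%Z by lia.
      replace (a + -1 * Z.of_nat (S i))%Z with (a + -1 * Z.of_nat i - 1)%Z by lia. apply F2. }
  assert (Const: forall v : V, straight_path adj opp 0 (fun _ => v)).
  { intros v. apply mk_sp; auto; intros; lia. }
  assert (NoCl: forall a L, 1 <= L <= n-1 -> d (a + Z.of_nat L)%Z = d a -> False).
  { intros a L HL E.
    destruct (HVP2 L (fun i => d (a + 1 * Z.of_nat i)%Z) ltac:(lia) (Seg a 1%Z L (or_introl eq_refl))
                0 (fun _ => d a) ltac:(lia) (Const _)) as [Hj _].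
    - cbv beta. f_equal. lia.
    - cbv beta. transitivity (d (a + Z.of_nat L)%Z); [symmetry; exact E| f_equal; lia].
    - lia. }
  assert (F3: forall a b, d a = d b -> (0 < b - a < T)%Z -> False).
  { intros a b E Hab.
    destruct (lt_eq_lt_dec (Z.to_nat (b - a)) n) as [[Hl|Hl]|Hl].
    - apply (NoCl a (Z.to_nat (b-a))); [lia|].
      replace (a + Z.of_nat (Z.to_nat (b-a)))%Z with b by lia. auto.
    - destruct (HVP2 (n-1) (fun i => d (a + Z.of_nat (n-1) + -1 * Z.of_nat i)%Z) ltac:(lia)
                 (Seg _ _ _ (or_intror eq_refl))
                 1 (fun i => d (a + Z.of_nat (n-1) + 1 * Z.of_nat i)%Z) ltac:(lia)
                 (Seg _ _ _ (or_introl eq_refl))) as [Hj _].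
      + cbv beta. f_equal.
      + cbv beta. replace (a + Z.of_nat (n-1) + 1 * Z.of_nat 1)%Z with b by lia.
        replace (a + Z.of_nat (n - 1) + -1 * Z.of_nat (n - 1))%Z with a by lia. auto.
      + assert (n = 2) by lia. subst n.
        destruct (Seg a 1%Z 2 (or_introl eq_refl)) as [[_ Hnb] _].
        apply (Hnb 2 ltac:(lia)). cbv beta. replace (2-2) with 0 by lia.
        replace (a + 1*Z.of_nat 2)%Z with b by lia. replace (a + 1 * Z.of_nat 0)%Z with a by lia. auto.
    - apply (NoCl b (2*n - Z.to_nat (b-a))); [lia|].
      replace (b + Z.of_nat (2 * n - Z.to_nat (b - a)))%Z with (a + T * 1)%Z by lia.
      rewrite Dper. auto. }
  assert (Dcong: forall a b, d a = d b -> forall e, d (a+e)%Z = d (b+e)%Z).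
  { intros a b E e. destruct (dd_cases n (b - a)) as [r [t [Hr Ht]]]; [lia|]. fold T in Ht.
    destruct r as [|r].
    - replace (b + e)%Z with (a + e + T * t)%Z by lia. rewrite Dper. auto.
    - exfalso. apply (F3 a (a + Z.of_nat (S r))%Z); [|lia].
      transitivity (d b); [exact E|]. rewrite <- (Dper (a + Z.of_nat (S r))%Z t). f_equal. lia. }
  assert (Edge: forall k, k < n+1 -> exists z,
            (P k = d z /\ P (S k) = d (z+1)%Z) \/ (P (S k) = d z /\ P k = d (z+1)%Z)).
  { intros k Hk. destruct Hpc as [_ He]. destruct (He k Hk) as [i [Hi [[E1 E2]|[E1 E2]]]];
      exists (Z.of_nat i); [left|right];
      replace (Z.of_nat i + 1)%Z with (Z.of_nat (S i)) by lia; rewrite !Dnat by lia; auto. }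
  assert (Claim: forall k, 1 <= k <= n+1 -> exists m s, (s = 1 \/ s = -1)%Z /\
            forall t, t <= k -> P t = d (m + s * Z.of_nat t)%Z).
  { induction k as [|k IH]; intros Hk; [lia|]. destruct k as [|k].
    - destruct (Edge 0 ltac:(lia)) as [z [[E1 E2]|[E1 E2]]].
      + exists z, 1%Z. split; auto. intros t Ht. destruct t as [|[|t]]; try lia.
        * rewrite E1. f_equal. lia.
        * rewrite E2. f_equal.
      + exists (z+1)%Z, (-1)%Z. split; auto. intros t Ht. destruct t as [|[|t]]; try lia.
        * rewrite E2. f_equal. lia.
        * rewrite E1. f_equal. lia.
    - destruct (IH ltac:(lia)) as [m [s [Hs HP]]].
      assert (Hnext: P (S (S k)) = d (m + s * Z.of_nat (S k) + 1)%Z \/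
                     P (S (S k)) = d (m + s * Z.of_nat (S k) - 1)%Z).
      { destruct (Edge (S k) ltac:(lia)) as [z [[E1 E2]|[E1 E2]]].
        - left. rewrite E2. apply Dcong. rewrite <- E1. apply HP. lia.
        - right. rewrite E1. replace z with (z + 1 + -1)%Z at 1 by lia.
          replace (m + s * Z.of_nat (S k) - 1)%Z with (m + s * Z.of_nat (S k) + -1)%Z by lia.
          apply Dcong. rewrite <- E2. apply HP. lia. }
      destruct SP as [[_ Pnb] _].
      destruct Hs; subst s; destruct Hnext as [E|E].
      + exists m, 1%Z. split; auto. intros t Ht.
        destruct (Nat.eq_dec t (S (S k))); [subst; rewrite E; f_equal; lia|]. apply HP; lia.
      + exfalso. apply (Pnb (S (S k)) ltac:(lia)). replace (S (S k) - 2) with k by lia.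
        rewrite E, HP by lia. f_equal. lia.
      + exfalso. apply (Pnb (S (S k)) ltac:(lia)). replace (S (S k) - 2) with k by lia.
        rewrite E, HP by lia. f_equal. lia.
      + exists m, (-1)%Z. split; auto. intros t Ht.
        destruct (Nat.eq_dec t (S (S k))); [subst; rewrite E; f_equal; lia|]. apply HP; lia. }
  destruct (Claim (n+1) ltac:(lia)) as [m [s [Hs HP]]].
  assert (SX: straight_path adj opp (n-1) (fun i => x (1+i))).
  { apply mk_sp; auto; intros i Hi.
    - apply Hxa; lia.
    - replace (1 + (i-1)) with (1+i-1) by lia. apply Hxs; lia. }
  assert (Px1 : P (n+1) = x 1).
  { unfold P. destruct (Nat.leb_spec (n+1) n); [lia|auto]. }
  assert (P0 : P 0 = x n).
  { unfold P. destruct (Nat.leb_spec 0 n); [|lia]. rewrite Nat.sub_0_r. auto. }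
  assert (P1 : P 1 = y (n-1)).
  { unfold P. destruct (Nat.leb_spec 1 n); [|lia]. auto. }
  destruct (HVP2 (n-1) (fun i => x (1+i)) ltac:(lia) SX (n-1)
              (fun i => d (m + s * Z.of_nat (n+1) + s * Z.of_nat i)%Z) (Nat.le_refl _)
              (Seg _ _ _ Hs)) as [_ Heq].
  - cbv beta. change (1+0) with 1. rewrite <- Px1, HP by lia. f_equal. lia.
  - replace (1 + (n-1)) with n by lia. rewrite <- P0, HP by lia.
    destruct Hs; subst s.
    + replace (m + 1 * Z.of_nat (n + 1) + 1 * Z.of_nat (n - 1))%Z with (m + 1 * Z.of_nat 0 + T * 1)%Z by lia.
      apply Dper.
    + replace (m + -1 * Z.of_nat (n + 1) + -1 * Z.of_nat (n - 1))%Z with (m + -1 * Z.of_nat 0 + T * -1)%Z by lia.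
      apply Dper.
  - specialize (Heq (n-2) ltac:(lia)). cbv beta in Heq.
    replace (1 + (n-2)) with (n-1) in Heq by lia.
    rewrite <- Heq, <- P0, <- P1, !HP by lia.
    destruct Hs; subst s.
    + replace (m + 1 * Z.of_nat (n + 1) + 1 * Z.of_nat (n - 2))%Z with (m + 1 * Z.of_nat 0 - 1 + T * 1)%Z by lia.
      rewrite Dper. replace (m + 1 * Z.of_nat 1)%Z with (m + 1 * Z.of_nat 0 + 1)%Z by lia. apply F2.
    + replace (m + -1 * Z.of_nat (n + 1) + -1 * Z.of_nat (n - 2))%Z with (m + -1 * Z.of_nat 0 + 1 + T * -1)%Z by lia.
      rewrite Dper. replace (m + -1 * Z.of_nat 1)%Z with (m + -1 * Z.of_nat 0 - 1)%Z by lia.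
      apply Hos, F2.
Qed.

Lemma rev_root {V : Type} (adj : V -> V -> Prop) (opp : V -> V -> V -> Prop) n x :
  (forall u v, adj u v -> adj v u) -> (forall v a b, opp v a b -> opp v b a) ->
  (forall v a, ~ opp v a a) ->
  root adj opp n x -> root adj opp n (fun i => x (n - i)).
Proof.
  intros Hsym Hos Hoa [[Hxa _] Hxs]. apply mk_sp; auto; intros i Hi.
  - apply Hsym. replace (n-i) with (S (n - S i)) by lia. apply Hxa; lia.
  - apply Hos. replace (n-(i-1)) with (S (n-i)) by lia.
    replace (n - S i) with (n - i - 1) by lia. apply Hxs; lia.
Qed.

Theorem proposition2p16 (V : Type) (adj : V -> V -> Prop)
    (opp : V -> V -> V -> Prop) (n : nat) :
  2 <= n -> veldkamp_ngon adj opp n ->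
  forall x y : nat -> V, root adj opp n x -> root adj opp n y ->
    x 0 = y 0 -> x n = y n ->
    (opp (x 0) (x 1) (y 1) <-> opp (x n) (x (n - 1)) (y (n - 1))).
Proof.
  intros Hn Hv x y Hx Hy H0 Hnn. split.
  - apply (fwd V adj opp n); auto.
  - intros H.
    pose proof Hv as [_ [[[Hsym Hirr] Hopp] _]].
    assert (Hos: forall v a b, opp v a b -> opp v b a)
      by (intros v a b; apply (proj1 (proj2 (proj1 (Hopp v))))).
    assert (Hoa: forall v a, ~ opp v a a)
      by (intros v a; apply (proj2 (proj2 (proj1 (Hopp v))))).
    pose proof (fwd V adj opp n Hn Hv (fun i => x (n - i)) (fun i => y (n - i))
                  (rev_root adj opp n x Hsym Hos Hoa Hx) (rev_root adj opp n y Hsym Hos Hoa Hy))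
      as K.
    cbv beta in K. rewrite Nat.sub_0_r, Nat.sub_diag in K.
    replace (n - (n-1)) with 1 in K by lia.
    apply K; auto.
Qed.
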